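(* Let $M$ be a primitively $n$-universal $R$-lattice of rank $m\ge 2n$. (a) If $m = 2n$, then $FM$ is hyperbolic. (b) If $m = 2n+1$, then $FM \cong \mathbb{H}^n\perp\langle (-1)^n dM\rangle$. (c) If $m = 2n+2$ and $dM = (-1)^{n+1}$, then $FM$ is hyperbolic.
   Context: $F$ is a nonarchimedean local field of characteristic not $2$ with ring of integers $R$. An $R$-lattice is a finitely generated $R$-submodule $M$ of a quadratic space $(V,B)$ over $F$, assumed integral ($B(M,M)\subseteq R$) and nondegenerate; $FM$ is the quadratic $F$-space spanned by $M$. A representation is an $R$-linear map preserving $B$, primitive if its image is a direct summand; $M$ is primitively $n$-universal if it primitively represents every $R$-lattice of rank $n$. The discriminant $dM$ is the determinant of a Gram matrix of $M$, taken modulo $(R^\times)^2$. $\mathbb{H}^n$ denotes the orthogonal sum of $n$ hyperbolic planes (a space is hyperbolic if it is such a sum), and $\langle c\rangle$ the one-dimensional space with $Q(v)=c$ for a basis vector $v$. *)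

(* Defs.v *)
From HB Require Import structures.
From mathcomp Require Import all_boot all_order all_algebra.
Set Implicit Arguments. Unset Strict Implicit. Unset Printing Implicit Defensive.
Import Order.TTheory GRing.Theory Num.Theory.
Local Open Scope ring_scope.

(* A normalized discrete valuation v : F^x -> Z (the value at 0 is irrelevant;
   v 0 = +oo is handled by the explicit zero tests below). *)

Section LocalField.
Variables (F : fieldType) (v : F -> int).

Definition inR (x : F) : bool := (x == 0) || (0 <= v x).
Definition unitR (x : F) : bool := (x != 0) && (v x == 0).
Definition vclose (k : int) (x y : F) : bool := (x == y) || (k <= v (x - y)).

Definition discrete_valuation : Prop :=
  [/\ (forall x y : F, x != 0 -> y != 0 -> v (x * y) = v x + v y),
      (forall x y : F, x != 0 -> y != 0 -> x + y != 0 ->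
          (v x <= v (x + y)) || (v y <= v (x + y)))
    & (exists pi : F, pi != 0 /\ v pi = 1)].

Definition v_cauchy (a : nat -> F) : Prop :=
  forall k : int, exists N : nat, forall i j : nat,
    (N <= i)%N -> (N <= j)%N -> vclose k (a i) (a j).

Definition v_converges (a : nat -> F) (L : F) : Prop :=
  forall k : int, exists N : nat, forall i : nat, (N <= i)%N -> vclose k (a i) L.

Definition v_complete : Prop :=
  forall a : nat -> F, v_cauchy a -> exists L : F, v_converges a L.

Definition finite_residue_field : Prop :=
  exists s : seq F, all inR s /\
    forall x : F, inR x -> exists2 r, r \in s & vclose 1 x r.

Definition nonarch_local_field_char_ne2 : Prop :=
  [/\ discrete_valuation, v_complete, finite_residue_field & (2%:R : F) != 0].

Definition integral_mx (m n : nat) (A : 'M[F]_(m, n)) : Prop :=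
  forall i j, inR (A i j).

(* An (integral, nondegenerate) R-lattice of rank n, given by its Gram matrix
   B(e_i, e_j) in an R-basis e_1..e_n. *)
Definition lattice (n : nat) (G : 'M[F]_n) : Prop :=
  [/\ G^T = G, integral_mx G & \det G != 0].

(* Representation of the lattice with Gram matrix GN (rank n) by the lattice
   with Gram matrix GM (rank m): an R-linear map R^n -> R^m, x |-> x *m X,
   preserving B.  It is primitive if its image is a direct summand, i.e. the
   (injective) map has an R-linear retraction R^m -> R^n. *)
Definition prim_represents (n m : nat) (GM : 'M[F]_m) (GN : 'M[F]_n) : Prop :=
  exists X : 'M[F]_(n, m),
    [/\ integral_mx X, X *m GM *m X^T = GN &
        exists Z : 'M[F]_(m, n), integral_mx Z /\ X *m Z = 1%:M].

Definition prim_n_universal (n m : nat) (GM : 'M[F]_m) : Prop :=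
  forall GN : 'M[F]_n, lattice GN -> prim_represents GM GN.

Definition isometric (m1 m2 : nat) (G1 : 'M[F]_m1) (G2 : 'M[F]_m2) : Prop :=
  exists (P : 'M[F]_(m1, m2)) (Q : 'M[F]_(m2, m1)),
    [/\ P *m Q = 1%:M, Q *m P = 1%:M & P *m G2 *m P^T = G1].

(* Gram matrix of H^k = H _|_ ... _|_ H (k hyperbolic planes), basis
   e_0,f_0,e_1,f_1,...  with B(e_i,f_i) = 1 and all other pairings 0. *)
Definition hypmx (k : nat) : 'M[F]_(k.*2) :=
  \matrix_(i, j) (((i./2 == j./2) && (i != j))%:R : F).

Definition hyperbolic (m : nat) (G : 'M[F]_m) : Prop :=
  exists k : nat, isometric G (hypmx k).

Definition hyp_plus (n : nat) (c : F) : 'M[F]_(n.*2 + 1) :=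
  block_mx (hypmx n) 0 0 c%:M.

End LocalField.

(* Main.v *)
From Stdlib Require Import ClassicalEpsilon Classical_Prop.
Require Import Defs.
From HB Require Import structures.
From mathcomp Require Import all_boot all_order all_algebra zify ring.
Set Implicit Arguments. Unset Strict Implicit. Unset Printing Implicit Defensive.
Import Order.TTheory GRing.Theory Num.Theory.
Local Open Scope ring_scope.

Section LA.
Variable F : fieldType.

Lemma sum_sel p (P : 'I_p -> bool) : (forall j j', P j -> P j' -> j = j') ->
  \sum_(j < p) ((P j)%:R : F) = ([exists j, P j])%:R.
Proof.
move=> uP; case: existsP => [[j0 Pj0]|nP].
  rewrite (bigD1 j0) //= Pj0 big1 ?addr0 // => j nj.
  case Pj: (P j) => //; by rewrite (uP _ _ Pj Pj0) eqxx in nj.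
by rewrite big1 // => j _; case Pj: (P j) => //; case: nP; exists j.
Qed.

Definition Sx p : 'M[F]_(p.*2, p) := \matrix_(i, j) ((i : nat) == (j : nat).*2)%:R.
Definition Sy p : 'M[F]_(p.*2, p) := \matrix_(i, j) ((i : nat) == (j : nat).*2.+1)%:R.

Lemma SxSyT p i k : (Sx p *m (Sy p)^T) i k = ((~~ odd i) && ((k : nat) == (i : nat).+1))%:R.
Proof.
rewrite !mxE; under eq_bigr => j _ do rewrite !mxE -natrM mulnb.
rewrite sum_sel; last by move=> j j' /andP[/eqP h1 _] /andP[/eqP h2 _]; apply: val_inj => /=; lia.
congr ((nat_of_bool _)%:R); apply/existsP/idP => [[j /andP[/eqP h1 /eqP h2]]|/andP[h1 /eqP h2]]; first by lia.
have hi : (i./2 < p)%N by have := ltn_ord i; lia.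
by exists (Ordinal hi) => /=; lia.
Qed.

Lemma SyT_Sx p : (Sy p)^T *m Sx p = 0.
Proof.
apply/matrixP => i k; rewrite !mxE; apply: big1 => j _; rewrite !mxE -natrM mulnb.
case: eqP => //= h1; case: eqP => //= h2; lia.
Qed.

Lemma SxT_Sy p : (Sx p)^T *m Sy p = 0.
Proof. by rewrite -[LHS]trmxK trmx_mul trmxK SyT_Sx trmx0. Qed.

Lemma SxT_Sx p : (Sx p)^T *m Sx p = 1%:M.
Proof.
apply/matrixP => i k; rewrite !mxE; under eq_bigr => j _ do rewrite !mxE -natrM mulnb.
rewrite sum_sel; last by move=> j j' /andP[/eqP h1 _] /andP[/eqP h2 _]; apply: val_inj => /=; lia.
have hi : ((i : nat).*2 < p.*2)%N by have := ltn_ord i; lia.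
congr ((nat_of_bool _)%:R); apply/existsP/eqP => [[j /andP[/eqP h1 /eqP h2]]|h].
  by apply: val_inj => /=; lia.
by exists (Ordinal hi) => /=; rewrite h eqxx.
Qed.

Lemma SyT_Sy p : (Sy p)^T *m Sy p = 1%:M.
Proof.
apply/matrixP => i k; rewrite !mxE; under eq_bigr => j _ do rewrite !mxE -natrM mulnb.
rewrite sum_sel; last by move=> j j' /andP[/eqP h1 _] /andP[/eqP h2 _]; apply: val_inj => /=; lia.
have hi : ((i : nat).*2.+1 < p.*2)%N by have := ltn_ord i; lia.
congr ((nat_of_bool _)%:R); apply/existsP/eqP => [[j /andP[/eqP h1 /eqP h2]]|h].
  by apply: val_inj => /=; lia.
by exists (Ordinal hi) => /=; rewrite h eqxx.
Qed.

Lemma hyp_S p : Sx p *m (Sy p)^T + Sy p *m (Sx p)^T = hypmx F p.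
Proof.
apply/matrixP => i k; rewrite mxE SxSyT.
have -> : (Sy p *m (Sx p)^T) = (Sx p *m (Sy p)^T)^T by rewrite trmx_mul trmxK.
rewrite mxE SxSyT !mxE -natrD; congr (_%:R).
have -> : (i != k) = ((i:nat) != k) by [].
lia.
Qed.


Lemma trD m n (A B : 'M[F]_(m,n)) : (A + B)^T = A^T + B^T.
Proof. by apply/matrixP => i j; rewrite !mxE. Qed.
Lemma trB m n (A B : 'M[F]_(m,n)) : (A - B)^T = A^T - B^T.
Proof. by apply/matrixP => i j; rewrite !mxE. Qed.
Lemma trZ m n a (A : 'M[F]_(m,n)) : (a *: A)^T = a *: A^T.
Proof. by apply/matrixP => i j; rewrite !mxE. Qed.

Lemma E_hyp p m (G : 'M[F]_m) (X Y : 'M_(p,m)) : G^T = G ->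
  X *m G *m X^T = 0 -> Y *m G *m Y^T = 0 -> X *m G *m Y^T = 1%:M ->
  (Sx p *m X + Sy p *m Y) *m G *m (Sx p *m X + Sy p *m Y)^T = hypmx F p.
Proof.
move=> sG hX hY hXY.
have hYX : Y *m G *m X^T = 1%:M.
  by have := congr1 trmx hXY; rewrite !trmx_mul trmxK sG trmx1 mulmxA.
have e1 : forall (A B : 'M_(p.*2,p)) (U V : 'M_(p,m)),
    (A *m U) *m G *m (B *m V)^T = A *m (U *m G *m V^T) *m B^T.
  by move=> A B U V; rewrite trmx_mul !mulmxA.
rewrite trD mulmxDl !mulmxDr !mulmxDl !e1 hX hY hXY hYX !mulmx0 !mul0mx !mulmx1 add0r addr0.
by rewrite addrC hyp_S.
Qed.

Lemma fixY p m (G : 'M[F]_m) (X Y0 : 'M_(p,m)) : (2%:R : F) != 0 -> G^T = G ->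
  X *m G *m X^T = 0 -> X *m G *m Y0^T = 1%:M ->
  exists Y, X *m G *m Y^T = 1%:M /\ Y *m G *m Y^T = 0.
Proof.
move=> h2 sG hX hXY.
set S := Y0 *m G *m Y0^T.
have sS : S^T = S by rewrite /S !trmx_mul trmxK sG mulmxA.
have hYX : Y0 *m G *m X^T = 1%:M.
  by have := congr1 trmx hXY; rewrite !trmx_mul trmxK sG trmx1 mulmxA.
have hh : (2%:R^-1 + 2%:R^-1 : F) = 1.
  by rewrite -mulr2n -[(2%:R^-1) *+ 2]mulr_natl mulfV.
exists (Y0 - 2%:R^-1 *: (S *m X)); split.
  rewrite trB trZ mulmxBr trmx_mul -!scalemxAr !mulmxA hX mul0mx scaler0 subr0 //.
rewrite trB trZ trmx_mul !(mulmxBr, mulmxBl) -!scalemxAr -!scalemxAl !mulmxA.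
have eS : Y0 *m G *m Y0^T = S by [].
clearbody S.
have h1 : S *m X *m G *m X^T = 0 by rewrite -!mulmxA (mulmxA X) hX mulmx0.
have h3 : S *m X *m G *m Y0^T = S by rewrite -!mulmxA (mulmxA X) hXY mulmx1.
rewrite h1 mul0mx h3 hYX mul1mx sS eS !scaler0 ?subr0.
by rewrite -addrA -opprD -scalerDl hh scale1r subrr.
Qed.

Lemma iso_of p m (e : p = m) (T : 'M[F]_(p,m)) (G : 'M_m) :
  G^T = G -> (T *m G *m T^T) \in unitmx -> isometric G (T *m G *m T^T).
Proof.
move=> sG; subst p => uD.
set D := T *m G *m T^T.
have sD : D^T = D by rewrite /D !trmx_mul trmxK sG mulmxA.
set P := G *m T^T *m invmx D.
have TP : T *m P = 1%:M by rewrite /P !mulmxA -/D mulmxV.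
have PT := mulmx1C TP.
exists P, T; split => //.
have PD : P *m D = G *m T^T by rewrite /P -mulmxA mulVmx // mulmx1.
have PtT : P^T = invmx D *m (T *m G).
  by rewrite /P !trmx_mul trmx_inv sD trmxK sG mulmxA.
by rewrite PD PtT !mulmxA -/P PT mul1mx.
Qed.

Lemma det_congr p m (e : p = m) (T : 'M[F]_(p,m)) (G : 'M_m) :
  exists t, \det (T *m G *m T^T) = t ^+ 2 * \det G /\ (row_full T -> t != 0).
Proof.
subst p; exists (\det T); rewrite !det_mulmx det_tr; split.
  by rewrite mulrAC expr2.
by move=> rf; rewrite -unitfE -unitmxE -row_full_unit.
Qed.

Lemma compl p r m (e : (p + r)%N = m) (E : 'M[F]_(p,m)) (G : 'M_m) : G^T = G ->
  (E *m G *m E^T) \in unitmx ->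
  exists K : 'M_(r,m), K *m G *m E^T = 0 /\ row_full (col_mx E K).
Proof.
move=> sG uD.
have rE : \rank E = p.
  apply/eqP; rewrite eqn_leq rank_leq_row /=.
  have := mxrankM_maxl (E *m G) E^T; have := mxrankM_maxl E G.
  by rewrite mxrank_unit // => h1 h2; apply: leq_trans h2 h1.
have rC : \rank (E^C)%MS = r by rewrite mxrank_compl rE -e addKn.
pose K1 := castmx (rC, erefl m) (row_base (E^C)%MS).
have fK1 : row_full (col_mx E K1).
  have e1 : (col_mx E K1 :=: E + E^C)%MS.
    apply: eqmx_trans (eqmx_sym (addsmxE E K1)) _.
    apply: adds_eqmx => //; apply: eqmx_trans (eqmx_cast _ _) _; exact: eq_row_base.
  by rewrite /row_full e1; exact: addsmx_compl_full.
pose A := K1 *m G *m E^T *m invmx (E *m G *m E^T).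
exists (K1 - A *m E); split.
  rewrite !mulmxBl.
  have -> : A *m E *m G *m E^T = K1 *m G *m E^T.
    by rewrite /A -!mulmxA (mulmxA E G) mulVmx // mulmx1.
  by rewrite subrr.
have -> : col_mx E (K1 - A *m E) = block_mx 1%:M 0 (- A) 1%:M *m col_mx E K1.
  by rewrite mul_block_col !mul1mx mul0mx addr0 mulNmx addrC.
have fL : row_full (block_mx 1%:M 0 (- A) 1%:M : 'M_(p + r)).
  by rewrite row_full_unit unitmxE det_lblock !det1 mulr1 unitr1.
by rewrite /row_full (eqmxMfull _ fL).
Qed.

Lemma hypE k (i j : 'I_k.*2) :
  hypmx F k i j = ((((i : nat)./2 == (j : nat)./2) && ((i : nat) != j))%:R).
Proof. by rewrite mxE. Qed.

Lemma neqE k (i j : 'I_k) : (i != j) = ((i : nat) != j).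
Proof. by []. Qed.
Lemma liftE k (i : 'I_k.+1) (j : 'I_k) : (lift i j : nat) = ((i <= j)%N + j)%N.
Proof. by []. Qed.
Lemma ordmaxE k : ((ord_max : 'I_k.+1) : nat) = k.
Proof. by []. Qed.

Definition hm N : 'M[F]_N := \matrix_(i, j) ((((i : nat)./2 == (j : nat)./2) && (i != j))%:R).

Lemma det_hm N : ~~ odd N -> \det (hm N.+2) = - \det (hm N).
Proof.
move=> eN.
have hj0 : (N < N.+2)%N by [].
have v1 : ((ord_max : 'I_N.+2) : nat) = N.+1 by [].
have v2 : ((Ordinal hj0) : nat) = N by [].
rewrite (expand_det_row _ ord_max) (bigD1 (Ordinal hj0)) // big1 ?Monoid.mulm1; last first.
  move=> j nj; rewrite mxE neqE v1.
  have : (j : nat) != N by [].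
  have := ltn_ord j => h1 h2.
  by rewrite (_ : _ && _ = false) ?mul0r //; lia.
rewrite mxE neqE v1 v2 (_ : _ && _ = true) ?mul1r; last by lia.
rewrite /cofactor v1 v2 -signr_odd (_ : odd _ = true); last by lia.
have v3 : ((ord_max : 'I_N.+1) : nat) = N by [].
rewrite expr1 (expand_det_row _ ord_max) (bigD1 ord_max) // big1 ?Monoid.mulm1; last first.
  move=> j nj; rewrite !mxE neqE !liftE v3 v1 v2.
  have hj : (j : nat) != N by move: nj; rewrite neqE v3.
  have := ltn_ord j => h1.
  by rewrite (_ : _ && _ = false) ?mul0r //; lia.
rewrite !mxE neqE !liftE v3 v1 v2 (_ : _ && _ = true) ?mul1r; last by lia.
rewrite /cofactor v3 -signr_odd (_ : odd _ = false) ?expr0 ?mul1r; last by lia.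
have -> : row' ord_max (col' ord_max (row' ord_max (col' (Ordinal hj0) (hm N.+2)))) = hm N.
  apply/matrixP => a b; rewrite !mxE !neqE !liftE v3 v1 v2.
  have := ltn_ord a; have := ltn_ord b => ha hb.
  congr ((nat_of_bool _)%:R); lia.
by rewrite mulN1r.
Qed.

Lemma det_hyp n : \det (hypmx F n) = (-1) ^+ n.
Proof.
elim: n => [|n IH]; first by rewrite det_mx00.
have -> : hypmx F n.+1 = hm n.*2.+2 by [].
by rewrite det_hm ?odd_double // -[hm _]/(hypmx F n) IH exprS mulN1r.
Qed.



Lemma trsym m p q (G : 'M[F]_m) (A : 'M_(p,m)) (B : 'M_(q,m)) : G^T = G ->
  (A *m G *m B^T)^T = B *m G *m A^T.
Proof. by move=> sG; rewrite !trmx_mul trmxK sG mulmxA. Qed.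

Lemma TGT p r m (G : 'M[F]_m) (E : 'M_(p,m)) (K : 'M_(r,m)) : G^T = G ->
  K *m G *m E^T = 0 ->
  col_mx E K *m G *m (col_mx E K)^T = block_mx (E *m G *m E^T) 0 0 (K *m G *m K^T).
Proof.
move=> sG hK.
have hK' : E *m G *m K^T = 0 by rewrite -trsym // hK trmx0.
by rewrite mul_col_mx tr_col_mx mul_col_row hK hK'.
Qed.

Lemma sign_unit p : ((-1) ^+ p : F) != 0.
Proof. by rewrite expf_neq0 // oppr_eq0 oner_eq0. Qed.

Lemma caseA p m (G : 'M[F]_m) (X Y0 : 'M_(p,m)) : (2%:R : F) != 0 -> G^T = G ->
  X *m G *m X^T = 0 -> X *m G *m Y0^T = 1%:M -> p.*2 = m -> isometric G (hypmx F p).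
Proof.
move=> h2 sG hX hXY e.
have [Y [hXY' hY]] := fixY h2 sG hX hXY.
have hE := E_hyp sG hX hY hXY'.
have := iso_of e (T := Sx p *m X + Sy p *m Y) sG; rewrite hE; apply.
by rewrite unitmxE det_hyp unitfE sign_unit.
Qed.

Lemma blockiso p r m (G : 'M[F]_m) (X Y : 'M_(p,m)) (K : 'M_(r,m)) : G^T = G ->
  X *m G *m X^T = 0 -> Y *m G *m Y^T = 0 -> X *m G *m Y^T = 1%:M ->
  K *m G *m X^T = 0 -> K *m G *m Y^T = 0 -> (p.*2 + r)%N = m ->
  \det (K *m G *m K^T) != 0 ->
  isometric G (block_mx (hypmx F p) 0 0 (K *m G *m K^T)).
Proof.
move=> sG hX hY hXY hKX hKY e hdet.
have hE := E_hyp sG hX hY hXY.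
set E := Sx p *m X + Sy p *m Y in hE.
have hKE : K *m G *m E^T = 0.
  by rewrite /E trD !trmx_mul !mulmxDr !mulmxA hKX hKY !mul0mx addr0.
have := iso_of e sG (T := col_mx E K); rewrite TGT // hE; apply.
by rewrite unitmxE det_ublock det_hyp unitfE mulf_neq0 ?sign_unit.
Qed.

Lemma exists_K p r m (G : 'M[F]_m) (X Y : 'M_(p,m)) : G^T = G ->
  X *m G *m X^T = 0 -> Y *m G *m Y^T = 0 -> X *m G *m Y^T = 1%:M -> (p.*2 + r)%N = m ->
  exists K : 'M_(r,m), [/\ K *m G *m X^T = 0, K *m G *m Y^T = 0 &
     exists t, t != 0 /\ (-1) ^+ p * \det (K *m G *m K^T) = t ^+ 2 * \det G].
Proof.
move=> sG hX hY hXY e.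
have hE := E_hyp sG hX hY hXY.
set E := Sx p *m X + Sy p *m Y in hE.
have uE : E *m G *m E^T \in unitmx by rewrite hE unitmxE det_hyp unitfE sign_unit.
have [K [hK fK]] := compl e sG uE.
have EX : E^T *m Sx p = X^T.
  by rewrite /E trD !trmx_mul mulmxDl -!mulmxA SxT_Sx SyT_Sx mulmx0 mulmx1 addr0.
have EY : E^T *m Sy p = Y^T.
  by rewrite /E trD !trmx_mul mulmxDl -!mulmxA SxT_Sy SyT_Sy mulmx0 mulmx1 add0r.
exists K; split.
- by rewrite -EX mulmxA hK mul0mx.
- by rewrite -EY mulmxA hK mul0mx.
have [t [ht1 ht2]] := det_congr e (col_mx E K) G.
exists t; split; first exact: ht2.
by rewrite -ht1 TGT // hE det_ublock det_hyp.
Qed.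

Lemma det2 (W : 'M[F]_2) : \det W = W 0 0 * W 1 1 - W 0 1 * W 1 0.
Proof.
rewrite (expand_det_row _ 0) !big_ord_recr big_ord0 /= /cofactor !det_mx11 !mxE /=.
have e0 : widen_ord (leqnSn 1) ord_max = 0 :> 'I_2 by apply: val_inj.
have e1 : lift 0 0 = 1 :> 'I_2 by apply: val_inj.
have e2 : lift 1 0 = 0 :> 'I_2 by apply: val_inj.
have e3 : ord_max = 1 :> 'I_2 by apply: val_inj.
rewrite e0 e1 e3 e2 expr0 expr1; ring.
Qed.
Lemma mx1E (w : 'rV[F]_2) (W : 'M_2) (v : 'rV_2) :
  (w *m W *m v^T) 0 0 = (w 0 0 * W 0 0 + w 0 1 * W 1 0) * v 0 0 + (w 0 0 * W 0 1 + w 0 1 * W 1 1) * v 0 1.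
Proof.
rewrite !mxE !big_ord_recr big_ord0 /= !mxE !big_ord_recr !big_ord0 /=.
have e0 : widen_ord (leqnSn 1) ord_max = 0 :> 'I_2 by apply: val_inj.
have e3 : ord_max = 1 :> 'I_2 by apply: val_inj.
rewrite e0 e3; ring.
Qed.
Lemma iso2 (W : 'M[F]_2) (s : F) : W^T = W -> s != 0 -> \det W = - s ^+ 2 ->
  exists w v : 'rV_2, w *m W *m w^T = 0 /\ w *m W *m v^T = 1%:M.
Proof.
move=> sW hs; rewrite det2.
have hb : W 1 0 = W 0 1 by rewrite -[in LHS]sW mxE.
rewrite hb => hd.
have E1 : forall (A : 'M[F]_1) c, A 0 0 = c -> A = c%:M.
  by move=> A c h; rewrite [A]mx11_scalar h.
have E0 : forall (A : 'M[F]_1), A 0 0 = 0 -> A = 0.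
  by move=> A h; apply/matrixP => i j; rewrite !ord1 h mxE.
case: (eqVneq (W 0 0) 0) => ha.
  have hb0 : W 0 1 != 0.
    apply/eqP => h0; move: hd; rewrite ha h0 !mul0r subr0 => /esym/eqP.
    by rewrite oppr_eq0 expf_eq0 (negbTE hs) andbF.
  exists (\row_j (j == 0)%:R), (\row_j ((j == 1)%:R * (W 0 1)^-1)); split.
    by apply: E0; rewrite mx1E !mxE /= hb ha; ring.
  by apply: E1; rewrite mx1E !mxE /= hb ha; field.
exists (\row_j (if j == 0 then s - W 0 1 else W 0 0)), (\row_j ((j == 0)%:R * (W 0 0 * s)^-1)); split.
  apply: E0; rewrite mx1E !mxE /= hb.
  have -> : W 1 1 = (W 0 1 ^+ 2 - s ^+ 2) / W 0 0.
    by apply: (mulfI ha); rewrite mulrCA mulfV // mulr1 -hd; ring.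
  by field.
apply: E1; rewrite mx1E !mxE /= hb.
by field; rewrite ha hs.
Qed.

Lemma sign2 p : ((-1) ^+ p : F) * (-1) ^+ p = 1.
Proof. by rewrite -exprD -signr_odd addnn odd_double expr0. Qed.

Lemma caseB p m (G : 'M[F]_m) (X Y0 : 'M_(p,m)) : (2%:R : F) != 0 -> G^T = G ->
  \det G != 0 -> X *m G *m X^T = 0 -> X *m G *m Y0^T = 1%:M -> m = p.*2.+1 ->
  isometric G (hyp_plus p ((-1) ^+ p * \det G)).
Proof.
move=> h2 sG dG hX hXY em.
have [Y [hXY' hY]] := fixY h2 sG hX hXY.
have e : (p.*2 + 1)%N = m by rewrite addn1.
have [K [hKX hKY [t [ht hdet]]]] := exists_K sG hX hY hXY' e.
pose K' := t^-1 *: K.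
have hK'X : K' *m G *m X^T = 0 by rewrite /K' -!scalemxAl hKX scaler0.
have hK'Y : K' *m G *m Y^T = 0 by rewrite /K' -!scalemxAl hKY scaler0.
have hW : K' *m G *m K'^T = ((-1) ^+ p * \det G)%:M.
  rewrite /K' trZ -!scalemxAl -scalemxAr [K *m G *m K^T]mx11_scalar !scale_scalar_mx.
  move: hdet; rewrite det_mx11 => hdet.
  have hc : (K *m G *m K^T) 0 0 = (-1) ^+ p * (t ^+ 2 * \det G).
    by rewrite -hdet mulrA sign2 mul1r.
  rewrite hc; congr (_%:M); field; exact: ht.
have := blockiso sG hX hY hXY' hK'X hK'Y e.
rewrite hW det_scalar expr1 mulf_neq0 ?sign_unit //.
by apply.
Qed.

Lemma mulK1 q r s m (G : 'M[F]_m) (A : 'M_(q,r)) (B : 'M_(r,m)) (C : 'M_(s,m)) :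
  (A *m B) *m G *m C^T = A *m (B *m G *m C^T).
Proof. by rewrite -!mulmxA. Qed.
Lemma mulK2 q r s m (G : 'M[F]_m) (A : 'M_(q,r)) (B : 'M_(r,m)) (C : 'M_(s,m)) :
  C *m G *m (A *m B)^T = (C *m G *m B^T) *m A^T.
Proof. by rewrite trmx_mul !mulmxA. Qed.

Lemma caseC p m (G : 'M[F]_m) (X Y0 : 'M_(p,m)) : (2%:R : F) != 0 -> G^T = G ->
  X *m G *m X^T = 0 -> X *m G *m Y0^T = 1%:M -> m = p.*2.+2 ->
  (exists u, u != 0 /\ \det G = (-1) ^+ p.+1 * u ^+ 2) ->
  exists k, isometric G (hypmx F k).
Proof.
move=> h2 sG hX hXY em [u [hu hdG]].
have [Y [hXY' hY]] := fixY h2 sG hX hXY.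
have e : (p.*2 + 2)%N = m by rewrite addn2.
have [K [hKX hKY [t [ht hdet]]]] := exists_K sG hX hY hXY' e.
have sW : (K *m G *m K^T)^T = K *m G *m K^T by rewrite trsym.
have dW : \det (K *m G *m K^T) = - (t * u) ^+ 2.
  have : (-1) ^+ p * ((-1) ^+ p * \det (K *m G *m K^T)) = (-1) ^+ p * (t ^+ 2 * \det G).
    by rewrite hdet.
  rewrite mulrA sign2 mul1r hdG => ->.
  transitivity ((-1) ^+ p * (-1) ^+ p * (- (t * u) ^+ 2)); first by rewrite [(-1) ^+ p.+1]exprS; move: ((-1) ^+ p) => sg; ring.
  by rewrite sign2 mul1r.
have [w [v [hw hwv]]] := iso2 sW (mulf_neq0 ht hu) dW.
have hXK : X *m G *m K^T = 0 by rewrite -trsym // hKX trmx0.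
have hYK : Y *m G *m K^T = 0 by rewrite -trsym // hKY trmx0.
exists (p + 1)%N.
apply: (caseA (X := col_mx X (w *m K)) (Y0 := col_mx Y (v *m K))) h2 sG _ _ _; last first.
  by rewrite em; lia.
- rewrite mul_col_mx tr_col_mx mul_col_row hXY'.
  rewrite mulK2 hXK mul0mx !mulK1 hKY mulmx0 mulK2 mulmxA hwv.
  by rewrite -(scalar_mx_block p 1 1).
rewrite mul_col_mx tr_col_mx mul_col_row hX.
rewrite mulK2 hXK mul0mx !mulK1 hKX mulmx0 mulK2 mulmxA hw.
by rewrite block_mx0.
Qed.

End LA.

Section Val.
Variables (F : fieldType) (v : F -> int).
Hypothesis hv : discrete_valuation v.

Definition sm (k : int) (x : F) : bool := (x == 0) || (k <= v x).

Lemma vM x y : x != 0 -> y != 0 -> v (x * y) = v x + v y.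
Proof. by move: hv; rewrite /discrete_valuation => -[h _ _]; apply: h. Qed.

Lemma v1 : v 1 = 0.
Proof. have h1 : (1 : F) != 0 by rewrite oner_eq0.
have := vM h1 h1; rewrite mulr1; lia. Qed.

Lemma vN1 : v (-1) = 0.
Proof.
have h : (-1 : F) != 0 by rewrite oppr_eq0 oner_eq0.
have := vM h h; rewrite mulrNN mulr1 v1; lia.
Qed.

Lemma vN x : x != 0 -> v (- x) = v x.
Proof.
move=> hx; have h : (-1 : F) != 0 by rewrite oppr_eq0 oner_eq0.
by rewrite -mulN1r vM // vN1 add0r.
Qed.

Lemma vV x : x != 0 -> v (x^-1) = - v x.
Proof.
move=> hx; have hx' : x^-1 != 0 by rewrite invr_eq0.
have := vM hx hx'; rewrite mulfV // v1; lia.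
Qed.

Lemma vultra x y : x != 0 -> y != 0 -> x + y != 0 ->
  (v x <= v (x + y)) || (v y <= v (x + y)).
Proof.
by move=> hx hy hxy; move: hv; rewrite /discrete_valuation => -[_ h _]; apply: h.
Qed.

Lemma vcloseE k x y : vclose v k x y = sm k (x - y).
Proof. by rewrite /vclose /sm subr_eq0. Qed.

Lemma inRE x : inR v x = sm 0 x.
Proof. by []. Qed.

Lemma sm0 k : sm k 0.
Proof. by rewrite /sm eqxx. Qed.

Lemma smN k x : sm k (- x) = sm k x.
Proof.
rewrite /sm oppr_eq0; case: (eqVneq x 0) => //= hx; by rewrite vN.
Qed.

Lemma smD k x y : sm k x -> sm k y -> sm k (x + y).
Proof.
rewrite /sm => h1 h2.
case: (eqVneq x 0) h1 => [->|hx] /= h1; first by rewrite add0r.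
case: (eqVneq y 0) h2 => [->|hy] /= h2; first by rewrite addr0 h1 orbT.
case: (eqVneq (x + y) 0) => //= hxy.
by case/orP: (vultra hx hy hxy) => h3; [apply: le_trans h1 h3 | apply: le_trans h2 h3].
Qed.

Lemma smB k x y : sm k x -> sm k y -> sm k (x - y).
Proof. by move=> h1 h2; apply: smD; rewrite ?smN. Qed.

Lemma smMM k l x y : sm k x -> sm l y -> sm (k + l) (x * y).
Proof.
rewrite /sm; case: (eqVneq x 0) => [->|hx]; first by rewrite mul0r eqxx.
case: (eqVneq y 0) => [->|hy]; first by rewrite mulr0 eqxx.
rewrite mulf_eq0 (negbTE hx) (negbTE hy) /= vM // => h1 h2; lia.
Qed.

Lemma sm_le l k x : l <= k -> sm k x -> sm l x.
Proof. rewrite /sm => hl /orP[->//|h]; apply/orP; right; lia. Qed.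

Lemma sm_all x : (forall k : nat, sm k%:Z x) -> x = 0.
Proof.
move=> h; have := h (absz (v x)).+1; rewrite /sm => /orP[/eqP//|h1]; lia.
Qed.

Lemma sm_sum k (I : finType) (f : I -> F) : (forall i, sm k (f i)) -> sm k (\sum_i f i).
Proof. move=> h; apply: (big_ind (sm k)) => //; [exact: sm0 | exact: smD]. Qed.

Definition smx k m n (A : 'M[F]_(m,n)) := forall i j, sm k (A i j).

Lemma smx_mul k l m n p (A : 'M[F]_(m,n)) (B : 'M[F]_(n,p)) :
  smx k A -> smx l B -> smx (k + l) (A *m B).
Proof. by move=> hA hB i j; rewrite mxE; apply: sm_sum => q; apply: smMM. Qed.

Lemma smxD k m n (A B : 'M[F]_(m,n)) : smx k A -> smx k B -> smx k (A + B).
Proof. by move=> hA hB i j; rewrite mxE; apply: smD. Qed.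

Lemma smxB k m n (A B : 'M[F]_(m,n)) : smx k A -> smx k B -> smx k (A - B).
Proof. by move=> hA hB i j; rewrite !mxE; apply: smB. Qed.

Lemma smx_tr k m n (A : 'M[F]_(m,n)) : smx k A -> smx k A^T.
Proof. by move=> hA i j; rewrite mxE. Qed.

Lemma smx_all m n (A : 'M[F]_(m,n)) : (forall k : nat, smx k%:Z A) -> A = 0.
Proof. by move=> h; apply/matrixP => i j; rewrite mxE; apply: sm_all => k; apply: h. Qed.

Lemma integralE m n (A : 'M[F]_(m,n)) : integral_mx v A <-> smx 0 A.
Proof. by []. Qed.

End Val.

Lemma pigeon (T : finType) (P : T -> nat -> Prop) :
  (forall J, exists j, (J <= j)%N /\ exists t, P t j) ->
  exists t, forall J, exists j, (J <= j)%N /\ P t j.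
Proof.
move=> H; apply: NNPP => hn.
have hall : forall t, exists J, forall j, (J <= j)%N -> ~ P t j.
  move=> t; apply: NNPP => h; apply: hn; exists t => J; apply: NNPP => h'.
  by apply: h; exists J => j hj hp; apply: h'; exists j.
have hl : forall l : seq T, exists J, forall t, t \in l -> forall j, (J <= j)%N -> ~ P t j.
  elim=> [|t l [J hJ]]; first by exists 0%N.
  have [Jt ht] := hall t; exists (maxn Jt J) => t'; rewrite inE => /orP[/eqP -> | ht'] j hj.
    by apply: ht; apply: leq_trans hj; apply: leq_maxl.
  by apply: hJ => //; apply: leq_trans hj; apply: leq_maxr.
have [J hJ] := hl (enum T).
have [j [hj [t ht]]] := H J.
by apply: (hJ t _ j hj ht); rewrite mem_enum.
Qed.

Section Clu.
Variables (F : fieldType) (v : F -> int).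
Hypothesis hv : discrete_valuation v.
Hypothesis hc : v_complete v.
Variables (s : seq F).
Hypothesis hs : all (inR v) s.
Hypothesis hrep : forall x : F, inR v x -> exists2 r, r \in s & vclose v 1 x r.
Variable pi : F.
Hypotheses (hpi : pi != 0) (vpi : v pi = 1).

Lemma vX j : v (pi ^+ j) = j%:Z.
Proof.
elim: j => [|j IH]; first by rewrite expr0 (v1 hv).
by rewrite exprS (vM hv) ?expf_neq0 // IH vpi; lia.
Qed.

Lemma sm_pi j : sm v j%:Z (pi ^+ j).
Proof. by rewrite /sm vX lexx orbT. Qed.

Lemma nth_inR i : inR v (nth 0 s i).
Proof.
case: (ltnP i (size s)) => hi; first by apply: (allP hs); rewrite mem_nth.
by rewrite nth_default // /inR eqxx.
Qed.

Lemma sub_ball k (y c : F) : sm v k%:Z (y - c) ->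
  let i := find (fun r => sm v 1 ((y - c) / pi ^+ k - r)) s in
  (i < size s)%N /\ sm v (k.+1)%:Z (y - (c + pi ^+ k * nth 0 s i)).
Proof.
move=> hyc i.
set z := (y - c) / pi ^+ k.
have hpk : pi ^+ k != 0 by rewrite expf_neq0.
have hz : inR v z.
  rewrite /inR /z; case: (eqVneq (y - c) 0) => [->|hn]; first by rewrite mul0r eqxx.
  move: hyc; rewrite /sm (negbTE hn) /= => hk.
  rewrite (vM hv) ?invr_eq0 // (vV hv) // vX; apply/orP; right; lia.
have [r rs hr] := hrep hz.
have hh : has (fun r => sm v 1 (z - r)) s by apply/hasP; exists r => //; rewrite -(vcloseE v).
split; first by rewrite /i -has_find.
have := nth_find 0 hh; rewrite -/i => hi.
have -> : y - (c + pi ^+ k * nth 0 s i) = pi ^+ k * (z - nth 0 s i).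
  by rewrite mulrBr /z mulrCA mulfV // mulr1 opprD addrA.
have -> : (k.+1)%:Z = k%:Z + 1 by lia.
by apply: (smMM hv) => //; apply: sm_pi.
Qed.

Variables (I : finType) (a : nat -> I -> F).
Hypothesis ha : forall j x, inR v (a j x).

Definition near (k : nat) (c y : I -> F) := forall x, sm v k%:Z (y x - c x).
Definition inf (k : nat) (c : I -> F) := forall J, exists j, (J <= j)%N /\ near k c (a j).

Lemma inf0 : inf 0 (fun _ => 0).
Proof. by move=> J; exists J; split => // x; rewrite subr0; apply: ha. Qed.

Lemma step k c : inf k c -> exists c', near k c c' /\ inf k.+1 c'.
Proof.
move=> hi.
pose cent (f : {ffun I -> 'I_(size s).+1}) := fun x => c x + pi ^+ k * nth 0 s (f x).
have [f hf] : exists f, forall J, exists j, (J <= j)%N /\ near k.+1 (cent f) (a j).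
  apply: pigeon => J; have [j [hj hn]] := hi J; exists j; split => //.
  exists [ffun x => inord (find (fun r => sm v 1 ((a j x - c x) / pi ^+ k - r)) s)] => x.
  have [h1 h2] := sub_ball (hn x).
  by rewrite /cent ffunE inordK ?(ltnW h1) //; apply: leq_trans h1 _.
exists (cent f); split => // x.
rewrite /cent addrC addKr.
have -> : k%:Z = k%:Z + 0 by rewrite addr0.
by apply: (smMM hv); [apply: sm_pi | apply: nth_inR].
Qed.

Fixpoint build (k : nat) : {c : I -> F | inf k c} :=
  match k with
  | 0 => exist _ (fun _ => 0) inf0
  | k'.+1 =>
      let e := constructive_indefinite_description _ (step (proj2_sig (build k'))) in
      exist _ (proj1_sig e) (proj2 (proj2_sig e))
  end.

Definition seqc k := proj1_sig (build k).

Lemma seqc_near k : near k (seqc k) (seqc k.+1).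
Proof.
rewrite /seqc /=.
set e := constructive_indefinite_description _ _.
exact: (proj1 (proj2_sig e)).
Qed.

Lemma seqc_inf k : inf k (seqc k).
Proof. exact: proj2_sig (build k). Qed.

Lemma near_trans i j c d e : (i <= j)%N -> near i c d -> near j d e -> near i c e.
Proof.
move=> hij h1 h2 x.
have -> : e x - c x = (e x - d x) + (d x - c x) by rewrite addrA subrK.
apply: (smD hv) => //; apply: (sm_le (k := j%:Z)) => //; lia.
Qed.

Lemma near_refl i c : near i c c.
Proof. by move=> x; rewrite subrr; apply: sm0. Qed.

Lemma seqc_cauchy i d : near i (seqc i) (seqc (i + d)).
Proof.
elim: d => [|d IH]; first by rewrite addn0; apply: near_refl.
rewrite addnS; apply: near_trans IH (seqc_near _); lia.
Qed.

Lemma cauchy x : v_cauchy v (fun i => seqc i x).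
Proof.
move=> k; exists (absz k) => i j hi hj; rewrite vcloseE.
have h1 := seqc_cauchy (absz k) (i - absz k) x.
have h2 := seqc_cauchy (absz k) (j - absz k) x.
rewrite subnKC // in h1; rewrite subnKC // in h2.
have -> : seqc i x - seqc j x = (seqc i x - seqc (absz k) x) - (seqc j x - seqc (absz k) x).
  by rewrite opprB addrA subrK.
apply: (sm_le (k := (absz k)%:Z)); first by lia.
exact: (smB hv).
Qed.

Definition L x := proj1_sig (constructive_indefinite_description _ (hc (cauchy x))).

Lemma L_conv x : v_converges v (fun i => seqc i x) (L x).
Proof. exact: proj2_sig (constructive_indefinite_description _ (hc (cauchy x))). Qed.

Lemma cluster (k : nat) J : exists j, (J <= j)%N /\ forall x, sm v k%:Z (a j x - L x).
Proof.
have [j [hj hn]] := seqc_inf k J.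
exists j; split => // x.
have [N hN] := L_conv x k%:Z.
have h1 := hN (maxn N k) (leq_maxl _ _); rewrite vcloseE in h1.
have h2 := seqc_cauchy k (maxn N k - k) x; rewrite subnKC ?leq_maxr // in h2.
have -> : a j x - L x = (a j x - seqc k x) - (seqc (maxn N k) x - seqc k x) + (seqc (maxn N k) x - L x).
  by ring.
by apply: (smD hv) => //; apply: (smB hv).
Qed.

End Clu.

Lemma cluster_main (F : fieldType) (v : F -> int) : nonarch_local_field_char_ne2 v ->
  forall (I : finType) (a : nat -> I -> F), (forall j x, inR v (a j x)) ->
  exists L : I -> F, forall (k : nat) J, exists j, (J <= j)%N /\ forall x, sm v k%:Z (a j x - L x).
Proof.
case=> hv hc [s [hs hrep]] _ I a ha.
move: (hv); rewrite /discrete_valuation => -[_ _ [pi [hpi vpi]]].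
exists (L hv hc hs hrep hpi vpi ha) => k J.
exact: cluster.
Qed.

Unset Implicit Arguments.

Lemma smx_mul0 {F : fieldType} {v : F -> int} (hv : discrete_valuation v) {k m n p}
  {A : 'M[F]_(m,n)} {B : 'M[F]_(n,p)} : smx v k A -> smx v 0 B -> smx v k (A *m B).
Proof. by move=> hA hB; rewrite -[k]addr0; apply: smx_mul. Qed.

Lemma smx0_mul {F : fieldType} {v : F -> int} (hv : discrete_valuation v) {k m n p}
  {A : 'M[F]_(m,n)} {B : 'M[F]_(n,p)} : smx v 0 A -> smx v k B -> smx v k (A *m B).
Proof. by move=> hA hB; rewrite -[k]add0r; apply: smx_mul. Qed.

Lemma smx_scal {F : fieldType} {v : F -> int} {k n} {c : F} :
  sm v k c -> smx v k (c%:M : 'M[F]_n).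
Proof. by move=> hc i j; rewrite mxE; case: (i == j); rewrite ?mulr1n ?mulr0n //; apply: sm0. Qed.

Lemma get_XZ {F : fieldType} {v : F -> int} (hF : nonarch_local_field_char_ne2 v)
  {n m} {GM : 'M[F]_m} (hM : lattice v GM) (hU : prim_n_universal v n GM) :
  exists (X : 'M_(n,m)) (Z : 'M_(m,n)), X *m Z = 1%:M /\ X *m GM *m X^T = 0.
Proof.
have hF' := hF; case: hF' => hv hc hres h2.
case: hM => sG iG dG.
move: (hv); rewrite /discrete_valuation => -[_ _ [pi [hpi vpi]]].
have vX : forall j, v (pi ^+ j) = j%:Z.
  elim=> [|j IH]; first by rewrite expr0 (v1 hv).
  by rewrite exprS (vM hv) ?expf_neq0 // IH vpi; lia.
have spi : forall j, sm v j%:Z (pi ^+ j) by move=> j; rewrite /sm vX lexx orbT.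
have hlat : forall j, lattice v ((pi ^+ j)%:M : 'M[F]_n).
  move=> j; split; first by rewrite tr_scalar_mx.
    by move=> i l; apply: smx_scal; apply: (sm_le (k := j%:Z)).
  by rewrite det_scalar !expf_neq0.
have hch : forall j, exists XZ : 'M[F]_(n,m) * 'M[F]_(m,n),
    [/\ integral_mx v XZ.1, integral_mx v XZ.2,
        XZ.1 *m GM *m XZ.1^T = (pi ^+ j)%:M & XZ.1 *m XZ.2 = 1%:M].
  move=> j; have [X [hX hG [Z [hZ hXZ]]]] := hU _ (hlat j).
  by exists (X, Z).
pose XZ j := proj1_sig (constructive_indefinite_description _ (hch j)).
have spec : forall j, [/\ integral_mx v (XZ j).1, integral_mx v (XZ j).2,
    (XZ j).1 *m GM *m (XZ j).1^T = (pi ^+ j)%:M & (XZ j).1 *m (XZ j).2 = 1%:M].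
  by move=> j; exact: (proj2_sig (constructive_indefinite_description _ (hch j))).
pose a j (x : ('I_n * 'I_m) + ('I_m * 'I_n)) :=
  match x with inl (i, l) => (XZ j).1 i l | inr (l, i) => (XZ j).2 l i end.
have ha : forall j x, inR v (a j x).
  move=> j [[i l]|[l i]] /=; by case: (spec j) => i1 i2 _ _.
have [L hL] := cluster_main hF ha.
pose X : 'M[F]_(n,m) := \matrix_(i, l) L (inl (i, l)).
pose Z : 'M[F]_(m,n) := \matrix_(l, i) L (inr (l, i)).
have close : forall k : nat, exists j, (k <= j)%N /\
    smx v k%:Z (X - (XZ j).1) /\ smx v k%:Z (Z - (XZ j).2).
  move=> k; have [j [hj hx]] := hL k k; exists j; split => //; split => i l; rewrite !mxE.
    by rewrite -(smN hv) opprB; apply: (hx (inl (i, l))).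
  by rewrite -(smN hv) opprB; apply: (hx (inr (i, l))).
have intX : smx v 0 X.
  have [j [_ [hx _]]] := close 0%N; case: (spec j) => h1 _ _ _.
  move=> i l; have -> : X i l = (X - (XZ j).1) i l + (XZ j).1 i l by rewrite !mxE subrK.
  by apply: (smD hv); [apply: hx | apply: h1].
have intZ : smx v 0 Z.
  have [j [_ [_ hz]]] := close 0%N; case: (spec j) => _ h1 _ _.
  move=> i l; have -> : Z i l = (Z - (XZ j).2) i l + (XZ j).2 i l by rewrite !mxE subrK.
  by apply: (smD hv); [apply: hz | apply: h1].
have intG : smx v 0 GM by [].
exists X, Z; split.
  apply/eqP; rewrite -subr_eq0; apply/eqP; apply: smx_all => k.
  have [j [hj [hx hz]]] := close k; case: (spec j) => i1 i2 _ h4.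
  have -> : X *m Z - 1%:M = (X - (XZ j).1) *m Z + (XZ j).1 *m (Z - (XZ j).2).
    by rewrite -h4 mulmxBl mulmxBr addrA subrK.
  apply: (smxD hv); first exact: (smx_mul0 hv hx intZ).
  by apply: (smx0_mul hv i1 hz).
apply: smx_all => k.
have [j [hj [hx hz]]] := close k; case: (spec j) => i1 i2 h3 _.
have -> : X *m GM *m X^T = (X - (XZ j).1) *m GM *m X^T
    + (XZ j).1 *m GM *m (X - (XZ j).1)^T + (XZ j).1 *m GM *m (XZ j).1^T.
  by rewrite trB !mulmxBl !mulmxBr -addrA subrK subrK.
rewrite h3; apply: (smxD hv); first apply: (smxD hv).
- exact: (smx_mul0 hv (smx_mul0 hv hx intG) (smx_tr intX)).
- exact: (smx0_mul hv (smx_mul0 hv i1 intG) (smx_tr hx)).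
by apply: smx_scal; apply: (sm_le (k := j%:Z)); [lia | apply: spi].
Qed.

Theorem corollary2p7 (F : fieldType) (v : F -> int)
  (hF : nonarch_local_field_char_ne2 v)
  (n m : nat) (GM : 'M[F]_m)
  (hM : lattice v GM) (hU : prim_n_universal v n GM)
  (hm : (n.*2 <= m)%N) :
  [/\ (m = n.*2 -> hyperbolic GM),
      (m = n.*2.+1 -> isometric GM (hyp_plus n ((-1) ^+ n * \det GM)))
    & (m = n.*2.+2 ->
         (exists u : F, unitR v u /\ \det GM = (-1) ^+ n.+1 * u ^+ 2) ->
         hyperbolic GM)].
Proof.
have [X [Z [hXZ hXGX]]] := get_XZ hF hM hU.
have hF' := hF; case: hF' => hv hc hres h2.
have hM' := hM; case: hM' => sG iG dG.
have uG : GM \in unitmx by rewrite unitmxE unitfE.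
have hY : X *m GM *m (Z^T *m invmx GM)^T = 1%:M.
  by rewrite trmx_mul trmxK trmx_inv sG -(mulmxA X) (mulmxA GM) mulmxV // mul1mx.
split.
- by move=> em; exists n; apply: (caseA h2 sG hXGX hY (esym em)).
- by move=> em; apply: (caseB h2 sG dG hXGX hY em).
move=> em [u [hu hdet]]; apply: (caseC h2 sG hXGX hY em).
exists u; split => //.
by move: hu; rewrite /unitR => /andP[].
Qed.
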